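(* Let $G$ be a tree with $\ell$ leaves and let $1\leq m\leq \ell$. Then $\mathrm{capt}(G,m)\leq \lceil \mathrm{diam}(G)/2\rceil+(m-1)\,\mathrm{diam}(G)$.
   Context: All graphs are reflexive (a player may stay in place). The game of $k$ cops and $m$ robbers on $G$: in round 0 the cops first choose starting vertices, then the robbers choose theirs. In each round $i\geq 1$, all cops move (each to an adjacent vertex or staying), then all robbers move likewise. Several players may occupy the same vertex. Whenever a cop and some robbers occupy the same vertex, those robbers are captured and take no further part in the game. Both sides have full information. The cops win if all robbers are captured after finitely many rounds. For a cop-win graph $G$ (e.g. a tree), $\mathrm{capt}(G,m)$ is the index of the round in which the last robber is captured when one cop plays to minimize this index and $m$ robbers play to maximize it. $\mathrm{diam}(G)$ is the diameter of $G$. *)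

(* Defs.v *)
From mathcomp Require Import all_boot.
Set Implicit Arguments. Unset Strict Implicit. Unset Printing Implicit Defensive.

(* The game is played on the
   reflexive graph: a player may move along an edge or stay put. *)
Section Graph.
Variables (T : finType) (e : rel T).

Definition step (v w : T) : bool := (v == w) || e v w.

Definition connected_graph : Prop := forall x y : T, connect e x y.

Definition acyclic_graph : Prop :=
  forall p : seq T, uniq p -> 2 < size p -> ~~ cycle e p.

Definition is_tree : Prop :=
  [/\ symmetric e, irreflexive e, connected_graph & acyclic_graph].

Definition nleaves : nat := #|[set v : T | #|[set w : T | e v w]| == 1]|.

Definition walk_len (x y : T) (n : nat) : bool :=
  [exists p : n.-tuple T, path e x p && (last x p == y)].

(* graph distance (the least length of a walk); for connected graphs this is
   always < #|T| *)
Definition dist (x y : T) : nat := find (walk_len x y) (iota 0 #|T|).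

Definition diam : nat := \max_(x : T) \max_(y : T) dist x y.

(* Game of one cop against m robbers.  Robber positions: Some v if the robber
   is still in the game at v, None if captured. *)
Definition capture (m : nat) (c : T) (R : {ffun 'I_m -> option T})
  : {ffun 'I_m -> option T} :=
  [ffun i => if R i == Some c then None else R i].

Definition robber_move (m : nat) (R R' : {ffun 'I_m -> option T}) : Prop :=
  forall i, match R i with
            | None => R' i = None
            | Some v => exists w, R' i = Some w /\ step v w
            end.

(* cop_wins n c R : it is the cop's turn, cop at c, robbers at R (captures
   already applied); the cop can force that all robbers are captured within
   n further rounds, whatever the robbers do. *)
Fixpoint cop_wins (m n : nat) (c : T) (R : {ffun 'I_m -> option T}) : Prop :=
  match n with
  | 0 => forall i, R i = None
  | n'.+1 => (forall i, R i = None) \/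
      exists c', step c c' /\
        forall R', robber_move (capture c' R) R' ->
                   cop_wins n' c' (capture c' R')
  end.

(* capt(G,m) <= k : the cop chooses a start vertex, then the m robbers choose
   theirs (round 0); the cop can guarantee that the last robber is captured in
   a round with index <= k. *)
Definition capt_le (m k : nat) : Prop :=
  exists c0 : T, forall r0 : {ffun 'I_m -> T},
    cop_wins k c0 (capture c0 [ffun i => Some (r0 i)]).

End Graph.

(* Main.v *)
Require Import Defs.
From mathcomp Require Import all_boot zify.
Set Implicit Arguments. Unset Strict Implicit. Unset Printing Implicit Defensive.

Lemma dist_le_walk (T : finType) (e : rel T) x n y :
  n < #|T| -> walk_len e x y n -> dist e x y <= n.
Proof.
move=> hn hw; rewrite leqNgt; apply/negP => hlt.
have := before_find 0 hlt; rewrite nth_iota // add0n hw //.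
Qed.

Lemma walk_dist (T : finType) (e : rel T) x p :
  path e x p -> dist e x (last x p) <= size p.
Proof.
case/shortenP => p' hp hu hs.
have hsz : size p' <= size p by apply: uniq_leq_size => //; case/andP: hu.
have hT : size p' < #|T|.
  have := max_card (mem (x :: p')); move/card_uniqP: (hu) => ->; done.
apply: leq_trans hsz; apply: dist_le_walk => //.
apply/existsP; exists (in_tuple p'); by rewrite /= hp eqxx.
Qed.

Lemma dist_walk (T : finType) (e : rel T) x y :
  connected_graph e -> exists p, [/\ path e x p, last x p = y & size p = dist e x y].
Proof.
move=> hc; have /connectP [p hp ->] := hc x y.
case/shortenP: hp => p' hp hu _.
have hT : size p' < #|T|.
  have := max_card (mem (x :: p')); move/card_uniqP: (hu) => ->; done.
have hh : has (walk_len e x (last x p')) (iota 0 #|T|).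
  apply/hasP; exists (size p'); first by rewrite mem_iota.
  apply/existsP; exists (in_tuple p'); by rewrite /= hp eqxx.
have := nth_find 0 hh; rewrite has_find size_iota in hh.
rewrite nth_iota // add0n -/(dist e x (last x p')).
case/existsP => t /andP [ht /eqP hl]; exists (val t); split => //.
by rewrite size_tuple.
Qed.

Lemma dist_triangle (T : finType) (e : rel T) x y z :
  connected_graph e -> dist e x z <= dist e x y + dist e y z.
Proof.
move=> hc; have [p [hp hl hs]] := dist_walk x y hc.
have [q [hq hl' hs']] := dist_walk y z hc.
have hpq : path e x (p ++ q) by rewrite cat_path hp hl hq.
have := walk_dist hpq; rewrite last_cat hl hl' size_cat hs hs'; done.
Qed.

Lemma dist_sym_le (T : finType) (e : rel T) x y :
  symmetric e -> connected_graph e -> dist e y x <= dist e x y.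
Proof.
move=> hsym hc; have [p [hp hl <-]] := dist_walk x y hc.
suff [q [hq hl' hsq]] : exists q, [/\ path e y q, last y q = x & size q = size p].
  by rewrite -hsq -hl' walk_dist.
elim: p x hp hl => [|a p IH] x /=; first by move=> _ ->; exists [::].
case/andP=> hxa hp hl; have [q [hq hq' hs]] := IH a hp hl.
exists (rcons q x); rewrite rcons_path hq hq' hsym hxa last_rcons size_rcons hs.
by [].
Qed.

Lemma dist_sym (T : finType) (e : rel T) x y :
  symmetric e -> connected_graph e -> dist e y x = dist e x y.
Proof. by move=> hs hc; apply/eqP; rewrite eqn_leq !dist_sym_le. Qed.

Lemma dist0 (T : finType) (e : rel T) x y :
  connected_graph e -> dist e x y = 0 -> x = y.
Proof.
move=> hc h0; have [[|a p] [_ /= hl hs]] := dist_walk x y hc => //.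
by rewrite h0 in hs.
Qed.

Lemma dist_xx (T : finType) (e : rel T) x : dist e x x = 0.
Proof. by apply/eqP; rewrite -leqn0 (walk_dist (p := [::]) (x := x)). Qed.

Lemma dist_edge (T : finType) (e : rel T) x y : e x y -> dist e x y <= 1.
Proof. by move=> h; have := walk_dist (e := e) (p := [:: y]) (x := x); rewrite /= h andbT; apply. Qed.

Lemma dist_step (T : finType) (e : rel T) x y : step e x y -> dist e x y <= 1.
Proof. by case/orP => [/eqP -> | /dist_edge //]; rewrite dist_xx. Qed.

Lemma geo_first (T : finType) (e : rel T) x y :
  connected_graph e -> x != y -> exists2 x', e x x' & dist e x' y = (dist e x y).-1.
Proof.
move=> hc hxy; have [[|a p] [hp hl hs]] := dist_walk x y hc.
  by rewrite -hl eqxx in hxy.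
subst y; case/andP: hp => hxa hp; exists a => //.
have h1 : dist e a (last a p) <= size p by apply: walk_dist.
have := dist_triangle x a (last a p) hc; have := dist_edge hxa.
rewrite /= in hs h1 * => h2 h3.
apply/eqP; rewrite -hs /= eqn_leq h1 -ltnS hs; apply: (leq_trans h3).
by rewrite -add1n leq_add2r.
Qed.

Lemma geo_last (T : finType) (e : rel T) x y :
  connected_graph e -> x != y -> exists2 y', e y' y & dist e x y' = (dist e x y).-1.
Proof.
move=> hc hxy; have [p [hp hl hs]] := dist_walk x y hc.
case/lastP: p hp hl hs => [|p a] hp hl hs; first by rewrite -hl eqxx in hxy.
move: hp hl; rewrite rcons_path last_rcons => /andP [hp ha] hl; subst a.
exists (last x p) => //.
have h1 : dist e x (last x p) <= size p by apply: walk_dist.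
have := dist_triangle x (last x p) y hc; have := dist_edge ha.
rewrite size_rcons in hs => h2 h3.
apply/eqP; rewrite -hs /= eqn_leq h1 /= -ltnS hs; apply: (leq_trans h3).
by rewrite -addn1 leq_add2l.
Qed.

Lemma no_two (T : finType) (e : rel T) z : is_tree e ->
  forall k x y q, x != y -> dist e z x = k -> dist e z y = k ->
  path e y q -> last y q = x -> uniq (y :: q) ->
  (forall v, v \in q -> (v == x) || (k < dist e z v)) -> False.
Proof.
case=> hsym hirr hc hac; elim=> [|k IH] x y q hxy dx dy hq hl hu hin.
  by move: hxy; rewrite -(dist0 hc dx) -(dist0 hc dy) eqxx.
have hxz : z != x by apply/eqP => hz; rewrite -hz dist_xx in dx.
have hyz : z != y by apply/eqP => hz; rewrite -hz dist_xx in dy.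
have [x1 hx1 dx1] := geo_last hc hxz; rewrite dx /= in dx1.
have [y1 hy1 dy1] := geo_last hc hyz; rewrite dy /= in dy1.
have hbig : forall w, w \in y :: q -> k < dist e z w.
  move=> w; rewrite inE => /orP [/eqP -> | /hin /orP [/eqP -> |]]; rewrite ?dx ?dy //.
  by move=> h; apply: ltnW.
have hnot : forall w, dist e z w = k -> w \notin y :: q.
  by move=> w hw; apply/negP => /hbig; rewrite hw ltnn.
have hqn : q != [::] by case: q hl {hu hin hbig hnot hq} => [/= hl|//]; rewrite hl eqxx in hxy.
case: (eqVneq x1 y1) => [exy | nxy].
  subst x1; apply: (negP (hac (y1 :: y :: q) _ _)).
  - by rewrite /= -/(uniq (y :: q)) hu andbT; have := hnot _ dy1; rewrite inE.
  - by case: q hqn {hl hu hin hbig hnot hq}.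
  by rewrite /= hy1 rcons_path hq hl hsym hx1.
apply: (IH x1 y1 (y :: rcons q x1)) => //.
- by rewrite /= hy1 rcons_path hq hl hsym hx1.
- by rewrite /= last_rcons.
- rewrite cons_uniq; apply/andP; split.
    rewrite -rcons_cons mem_rcons inE negb_or eq_sym nxy /=; exact: hnot _ dy1.
  rewrite -rcons_cons rcons_uniq hu andbT; exact: hnot _ dx1.
move=> v; rewrite inE mem_rcons inE => /or3P [/eqP ->| /eqP ->|/hin]; rewrite ?dy ?eqxx ?ltnSn ?orbT //.
case/orP => [/eqP ->|]; first by rewrite dx leqnn orbT.
by move=> h; rewrite (ltnW h) orbT.
Qed.

Lemma adj_dist (T : finType) (e : rel T) z x y : is_tree e -> e x y ->
  dist e z y = (dist e z x).+1 \/ dist e z x = (dist e z y).+1.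
Proof.
move=> ht hxy; have ht' := ht; case: ht' => hsym hirr hc hac.
have h1 := dist_triangle z x y hc; have h2 := dist_triangle z y x hc.
have h3 := dist_edge hxy; have h4 : dist e y x <= 1 by apply: dist_edge; rewrite hsym.
have hne : dist e z x <> dist e z y.
  move=> heq; apply: (no_two ht (k := dist e z x) (x := x) (y := y) (q := [:: x])) => //.
  - by apply/eqP => exy; subst y; rewrite hirr in hxy.
  - by rewrite /= hsym hxy.
  - rewrite /= inE andbT; apply/eqP => exy; subst y; by rewrite hirr in hxy.
  by move=> v; rewrite inE => ->.
lia.
Qed.

Lemma subtree_step (T : finType) (e : rel T) z c r r' : is_tree e ->
  dist e z r = dist e z c + dist e c r -> r != c -> step e r r' ->
  r' = c \/ dist e z r' = dist e z c + dist e c r'.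
Proof.
move=> ht hr hrc; have ht' := ht; case: ht' => hsym hirr hc hac.
case/orP => [/eqP <-|hrr]; first by right.
have hb : 0 < dist e c r.
  rewrite lt0n; apply/eqP => h0; move: (dist0 hc h0) => ecr; by rewrite ecr eqxx in hrc.
have t1 := dist_triangle z c r' hc; have t2 := dist_triangle c r r' hc.
have t3 := dist_edge hrr.
case: (adj_dist z ht hrr) => hz; first by right; lia.
case: (adj_dist c ht hrr) => hcc; last by right; lia.
exfalso.
have hcr : c != r by rewrite eq_sym.
have [s hsr ds] := geo_last hc hcr.
have t4 := dist_triangle z c s hc; have t5 := dist_triangle z s r hc.
have t6 := dist_edge hsr.
have dzs : dist e z s = dist e z r' by lia.
apply: (no_two ht (k := dist e z r') (x := s) (y := r') (q := [:: r; s])) => //.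
- by apply/eqP => esr; subst s; lia.
- by [].
- by rewrite /= (hsym r' r) hrr (hsym r s) hsr.
- rewrite /= !inE andbT !negb_or; repeat (apply/andP; split); apply/eqP => h; subst; lia.
move=> v; rewrite !inE => /orP [/eqP ->|->] //; rewrite hz; lia.
Qed.

Lemma cop_step (T : finType) (e : rel T) z c r : connected_graph e ->
  dist e z r = dist e z c + dist e c r -> c != r ->
  exists c', [/\ e c c', dist e z c' = (dist e z c).+1 &
                 dist e z r = dist e z c' + dist e c' r].
Proof.
move=> hc hr hcr; have [c' hcc' dc'] := geo_first hc hcr; exists c'.
have hb : 0 < dist e c r.
  rewrite lt0n; apply/eqP => h0; move: (dist0 hc h0) => ecr; by rewrite ecr eqxx in hcr.
have t1 := dist_triangle z c c' hc; have t2 := dist_triangle z c' r hc.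
have t3 := dist_edge hcc'.
split => //; lia.
Qed.

Lemma diam_ge (T : finType) (e : rel T) x y : dist e x y <= diam e.
Proof.
have h1 := @leq_bigmax _ (fun x => \max_(y:T) dist e x y) x.
have h2 := @leq_bigmax _ (fun y => dist e x y) y.
exact: leq_trans h2 h1.
Qed.

Lemma diam_eq (T : finType) (e : rel T) (x0 : T) : exists u v, diam e = dist e u v.
Proof.
have hT : 0 < #|T| by apply/card_gt0P; exists x0.
have [u hu] := eq_bigmax (fun x => \max_y dist e x y) hT.
have [v hv] := eq_bigmax (fun y => dist e u y) hT.
by exists u, v; rewrite /diam hu hv.
Qed.

Lemma center (T : finType) (e : rel T) (x0 : T) : is_tree e ->
  exists c, forall x, dist e c x <= uphalf (diam e).
Proof.
move=> ht; have ht' := ht; case: ht' => hsym hirr hc hac.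
have [u [v hD]] := diam_eq e x0.
set D := diam e in hD *; set h := uphalf D.
have hU : h + h = odd D + D by rewrite addnn uphalfK.
have hodd : odd D <= 1 by apply: leq_b1.
have hmax : forall a b, dist e a b <= D by move=> a b; apply: diam_ge.
case: (leqP D 1) => hD1.
  by exists u => x; apply: leq_trans (hmax u x) _; lia.
have [p [hp hl hs]] := dist_walk u v hc.
have hhD : h <= size p by lia.
set c := last u (take h p).
have hp' : path e u (take h p ++ drop h p) by rewrite cat_take_drop.
rewrite cat_path in hp'; case/andP: hp' => hp1 hp2.
have duc : dist e u c <= h.
  by have := walk_dist hp1; rewrite size_take; case: ifP => //; lia.
have dcv : dist e c v <= D - h.
  have := walk_dist hp2; rewrite -last_cat cat_take_drop hl size_drop hs -hD //.
have t := dist_triangle u c v hc.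
have duc' : dist e u c = h by lia.
have dcv' : dist e c v = D - h by lia.
have dvc : dist e v c = D - h by rewrite dist_sym.
exists c => x.
have S_le : forall z, dist e z x = dist e z c + dist e c x -> dist e z c = h \/ dist e z c = D - h ->
  dist e c x <= h.
  by move=> z hz [] hzc; have := hmax z x; lia.
(* every vertex other than c is on the u side or the v side *)
suff side : forall n y, dist e c y = n.+1 ->
   dist e u y = dist e u c + dist e c y \/ dist e v y = dist e v c + dist e c y.
  case hx : (dist e c x) => [//|n].
  case: (side n x hx) => hs'; rewrite -hx.
    by apply: (S_le u) => //; left.
  by apply: (S_le v) => //; right.
elim=> [|n IH] y hy.
  have hcy : c != y by apply/eqP => ecy; rewrite -ecy dist_xx in hy.
  have [y1 hcy1 dy1] := geo_first hc hcy; rewrite hy /= in dy1.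
  have ey : y1 = y by apply: dist0 hc dy1.
  subst y1.
  case: (adj_dist u ht hcy1) => hu; first by left; rewrite hu hy addn1.
  right.
  case: (adj_dist v ht hcy1) => hv; first by rewrite hv hy addn1.
  exfalso.
  have hcv : c != v by apply/eqP => ecv; rewrite -ecv dist_xx in dcv'; lia.
  have [y' hcy' dy'] := geo_first hc hcv.
  have dvy' : dist e v y' = dist e v c - 1 by rewrite dist_sym // dy' dcv' dvc; lia.
  have t2 := dist_triangle u y' v hc.
  apply: (no_two ht (z := v) (k := dist e v y) (x := y) (y := y') (q := [:: c; y])) => //.
  - by apply/eqP => eyy; subst y'; lia.
  - lia.
  - by rewrite /= (hsym y' c) hcy' hcy1.
  - rewrite /= !inE andbT !negb_or; repeat (apply/andP; split); apply/eqP => hh; subst; lia.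
  by move=> w; rewrite !inE => /orP [/eqP ->|->] //; rewrite hv; lia.
have hcy : c != y by apply/eqP => ecy; rewrite -ecy dist_xx in hy.
have [y1 hy1 dy1] := geo_last hc hcy; rewrite hy /= in dy1.
have hy1c : y1 != c by apply/eqP => ey1; rewrite ey1 dist_xx in dy1.
have hstep : step e y1 y by rewrite /step hy1 orbT.
have hyc : y != c by rewrite eq_sym.
case: (IH y1 dy1) => hside.
  left; case: (subtree_step ht hside hy1c hstep) => // eyc; by rewrite eyc eqxx in hyc.
right; case: (subtree_step ht hside hy1c hstep) => // eyc; by rewrite eyc eqxx in hyc.
Qed.

Definition alive (T : finType) (m : nat) (R : {ffun 'I_m -> option T}) : nat :=
  #|[set i | R i != None]|.

Lemma wins_none (T : finType) (e : rel T) m n c (R : {ffun 'I_m -> option T}) :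
  (forall i, R i = None) -> cop_wins e n c R.
Proof. by case: n => [|n] h //=; left. Qed.

Lemma wins_succ (T : finType) (e : rel T) m n c (R : {ffun 'I_m -> option T}) :
  cop_wins e n c R -> cop_wins e n.+1 c R.
Proof.
elim: n c R => [|n IH] c R /=; first by left.
case=> [h|[c' [hs hR]]]; first by left.
by right; exists c'; split => // R' hR'; apply: IH; apply: hR.
Qed.

Lemma wins_mono (T : finType) (e : rel T) m n n' c (R : {ffun 'I_m -> option T}) :
  n <= n' -> cop_wins e n c R -> cop_wins e n' c R.
Proof.
move=> /subnK <-; elim: (n' - n) => [//|k IH] h.
by rewrite addSn; apply: wins_succ; apply: IH.
Qed.

Lemma captureE (T : finType) m c (R : {ffun 'I_m -> option T}) i :
  capture c R i = if R i == Some c then None else R i.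
Proof. exact: ffunE. Qed.

Lemma capture_ne (T : finType) m c (R : {ffun 'I_m -> option T}) i :
  capture c R i != Some c.
Proof. by rewrite captureE; case: ifP => // ->. Qed.

Lemma alive_sub (T : finType) m (R R' : {ffun 'I_m -> option T}) :
  (forall i, R i = None -> R' i = None) -> alive R' <= alive R.
Proof.
move=> h; apply: subset_leq_card; apply/subsetP => i; rewrite !inE.
by apply: contra => /eqP /h ->.
Qed.

Lemma alive_lt (T : finType) m (R R' : {ffun 'I_m -> option T}) i :
  (forall i, R i = None -> R' i = None) -> R i != None -> R' i = None ->
  alive R' < alive R.
Proof.
move=> h hi hi'; apply: proper_card; rewrite properE; apply/andP; split.
  apply/subsetP => k; rewrite !inE; by apply: contra => /eqP /h ->.
apply/subsetPn; exists i; rewrite !inE ?hi' //.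
Qed.

Lemma chase (T : finType) (e : rel T) m z H (N j : nat) : is_tree e ->
  (forall x, dist e z x <= H) ->
  (forall c (R : {ffun 'I_m -> option T}), (forall i, R i != Some c) ->
      alive R <= j -> cop_wins e N c R) ->
  forall t c (R : {ffun 'I_m -> option T}) i r,
    H = dist e z c + t -> R i = Some r -> r != c ->
    dist e z r = dist e z c + dist e c r -> alive R <= j.+1 ->
    (forall i, R i != Some c) -> cop_wins e (N + t) c R.
Proof.
move=> ht hH cont; have ht' := ht; case: ht' => hsym hirr hc hac.
elim=> [|t IH] c R i r hHt hRi hrc hinv hal hcap.
  exfalso; have := hH r; rewrite hinv hHt addn0.
  have : 0 < dist e c r.
    rewrite lt0n; apply/eqP => h0; move: (dist0 hc h0) => ecr; by rewrite ecr eqxx in hrc.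
  lia.
have hcr : c != r by rewrite eq_sym.
have [c' [hcc' dzc' hinv']] := cop_step hc hinv hcr.
rewrite addnS /=; right; exists c'; split; first by rewrite /step hcc' orbT.
move=> R' hmove.
have hsub1 : forall k, R k = None -> capture c' R k = None.
  by move=> k hk; rewrite captureE hk.
have hsub2 : forall k, capture c' R k = None -> R' k = None.
  by move=> k hk; have := hmove k; rewrite hk.
have hsub3 : forall k, R' k = None -> capture c' R' k = None.
  by move=> k hk; rewrite captureE hk.
have hsub : forall k, R k = None -> capture c' R' k = None.
  by move=> k /hsub1 /hsub2 /hsub3.
have hRi' : R i != None by rewrite hRi.
case hR'' : (capture c' R' i) => [r''|].
  have hr''c : r'' != c'.
    by apply/eqP => er; have := capture_ne c' R' i; rewrite hR'' er eqxx.
  have hR'i : R' i = Some r''.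
    by move: hR''; rewrite captureE; case: ifP.
  have hrc' : r != c'.
    apply/eqP => er; have := hsub2 i; rewrite captureE hRi er eqxx hR'i.
    by move=> /(_ erefl).
  have := hmove i; rewrite captureE hRi.
  have -> : (Some r == Some c') = false by apply/negbTE; rewrite /eq_op /=.
  case=> w [hw hstep]; rewrite hR'i in hw; case: hw => hw; subst w.
  case: (subtree_step ht hinv' hrc' hstep) => [er|hinv''].
    by rewrite er eqxx in hr''c.
  apply: (IH c' _ i r'') => //.
  - lia.
  - by apply: leq_trans hal; apply: alive_sub.
  - by move=> k; apply: capture_ne.
apply: (wins_mono (n := N)); first by rewrite leq_addr.
apply: cont; first by move=> k; apply: capture_ne.
have := alive_lt hsub hRi' hR''; lia.
Qed.

Lemma all_win (T : finType) (e : rel T) m : is_tree e ->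
  forall j c (R : {ffun 'I_m -> option T}), (forall i, R i != Some c) ->
    alive R <= j -> cop_wins e (j * diam e) c R.
Proof.
move=> ht; elim=> [|j IH] c R hcap hal.
  apply: wins_none => i; apply/eqP; apply: contraTT hal => hi.
  by rewrite -ltnNge /alive card_gt0; apply/set0Pn; exists i; rewrite inE.
case: (pickP (fun i => R i != None)) => [i hi|hn]; last first.
  by apply: wins_none => k; apply/eqP; apply/negbFE; exact: hn k.
case hRi : (R i) => [r|]; last by rewrite hRi in hi.
have hrc : r != c by apply/eqP => erc; have := hcap i; rewrite hRi erc eqxx.
have := chase (z := c) (H := diam e) (N := j * diam e) ht (@diam_ge _ e c) (IH)
  (t := diam e) (c := c) (R := R) (i := i) (r := r).
move=> H1; rewrite mulSn addnC; apply: H1 => //; by rewrite dist_xx.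
Qed.

Theorem mainTheorem9 (T : finType) (e : rel T) (m : nat) :
  is_tree e -> 1 <= m <= nleaves e ->
  capt_le e m (uphalf (diam e) + (m - 1) * diam e).
Proof.
move=> ht /andP [hm hl].
have hpos : 0 < nleaves e by exact: leq_trans hm hl.
move: hpos; rewrite /nleaves => /card_gt0P [x0 _].
have [c hcen] := center x0 ht.
exists c => r0; set R := capture c _.
have hcap : forall i, R i != Some c by move=> i; apply: capture_ne.
have hal : alive R <= (m - 1).+1.
  rewrite subn1 prednK // /alive; apply: leq_trans (subset_leq_card (subsetT _)) _.
  by rewrite cardsT card_ord.
case: (pickP (fun i => R i != None)) => [i hi|hn]; last first.
  by apply: wins_none => k; apply/eqP; apply/negbFE; exact: hn k.
case hRi : (R i) => [r|]; last by rewrite hRi in hi.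
have hrc : r != c by apply/eqP => erc; have := hcap i; rewrite hRi erc eqxx.
have := chase (z := c) (H := uphalf (diam e)) (N := (m - 1) * diam e) ht hcen
  (all_win ht (j := m - 1)) (t := uphalf (diam e)) (c := c) (R := R) (i := i) (r := r).
move=> H1; rewrite addnC; apply: H1 => //; by rewrite dist_xx.
Qed.
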